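(* Let $n\ge m\ge 2$ and $d$ be positive integers with $n+1\le\binom{d+m-2}{m-1}$. Then the maximal and minimal $h$-vectors of Perazzo algebras with invariants $n,m,d$ coincide (i.e. all such Perazzo algebras have the same Hilbert function) if and only if \[ \binom{d+m-3}{m-1}\le n+1. \]
   Context: A Perazzo form of degree $d$ is $F=X_0p_0+\dots+X_np_n+G\in K[X_0,\dots,X_n,U_1,\dots,U_m]_d$ ($K$ algebraically closed, char $0$) with $p_i\in K[U_1,\dots,U_m]_{d-1}$ algebraically dependent but linearly independent, $G\in K[U_1,\dots,U_m]_d$; $A_F=R/\operatorname{Ann}_RF$. With $\alpha_i=\binom{m+i-1}{m-1}$, $\beta_i=\binom{d+m-i-1}{m-1}$, $\gamma_i=(n+1)\binom{m+i-2}{m-1}$, the maximal $h$-vector is symmetric with $i$-th entry $\min\{\alpha_i+\beta_i,\alpha_i+\gamma_i\}$ and the minimal $h$-vector is symmetric with $i$-th entry $\min\{2(n+1),\alpha_i+n+1,\alpha_i+\beta_i\}$ for $1\le i\le d/2$ (and $1$ for $i=0$). *)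

(* Defs.v *)
From mathcomp Require Import all_boot.
Set Implicit Arguments. Unset Strict Implicit. Unset Printing Implicit Defensive.

(* Invariants of a Perazzo form: n (so n+1 variables X_0..X_n), m (variables
   U_1..U_m), d (degree).  Following the paper's notation: *)
Definition pz_alpha (m i : nat) : nat := 'C(m + i - 1, m - 1).
Definition pz_beta (m d i : nat) : nat := 'C(d + m - i - 1, m - 1).
Definition pz_gamma (n m i : nat) : nat := (n + 1) * 'C(m + i - 2, m - 1).

Definition hmax (n m d i : nat) : nat :=
  let j := minn i (d - i) in
  if j == 0 then 1
  else minn (pz_alpha m j + pz_beta m d j) (pz_alpha m j + pz_gamma n m j).

Definition hmin (n m d i : nat) : nat :=
  let j := minn i (d - i) in
  if j == 0 then 1
  else minn (2 * (n + 1)) (minn (pz_alpha m j + n + 1) (pz_alpha m j + pz_beta m d j)).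

(* Main.v *)
Require Import Defs.
From mathcomp Require Import all_boot.
From mathcomp Require Import zify.

Lemma L1 a b g n : a <= b -> b <= n + 1 -> n + 1 <= g ->
  minn (a + b) (a + g) = minn (2 * (n + 1)) (minn (a + n + 1) (a + b)).
Proof. lia. Qed.

Lemma L2 a b g n : n + 1 < g -> n + 1 < b ->
  minn (a + b) (a + g) <> minn (2 * (n + 1)) (minn (a + n + 1) (a + b)).
Proof. lia. Qed.

Lemma L3 a b g n : a <= n + 1 -> n + 1 <= b -> g = n + 1 ->
  minn (a + b) (a + g) = minn (2 * (n + 1)) (minn (a + n + 1) (a + b)).
Proof. lia. Qed.

Lemma binm1 m : 1 <= m -> 'C(m, m - 1) = m.
Proof. move=> h; rewrite bin_sub // bin1 //. Qed.

Lemma gam_big n m j : 2 <= m -> 2 <= j -> n + 1 < pz_gamma n m j.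
Proof.
move=> hm hj; rewrite /pz_gamma.
have : 'C(m, m - 1) <= 'C(m + j - 2, m - 1) by apply: leq_bin2l; lia.
rewrite binm1; last lia.
move=> h; nia.
Qed.

Theorem proposition4p6 (n m d : nat) :
  2 <= m -> m <= n -> 0 < d -> n + 1 <= 'C(d + m - 2, m - 1) ->
  ((forall i, i <= d -> hmax n m d i = hmin n m d i) <->
   'C(d + m - 3, m - 1) <= n + 1).
Proof.
move=> hm hmn hd hC; split.
- move=> H.
  case: (leqP d 3) => hd3.
    apply: leq_trans (_ : 'C(m, m - 1) <= _).
      by apply: leq_bin2l; lia.
    rewrite binm1; lia.
  have := H 2 (ltnW (ltnW hd3)).
  rewrite /hmax /hmin.
  have -> : minn 2 (d - 2) = 2 by lia.
  rewrite /=.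
  case: (leqP 'C(d + m - 3, m - 1) (n + 1)) => // hlt.
  move=> E; exfalso; move: E; apply: L2; first exact: (gam_big n m _ hm (leqnn 2)).
  rewrite /pz_beta; have -> : d + m - 2 - 1 = d + m - 3 by lia. done.
- move=> hB i hi; rewrite /hmax /hmin.
  set j := minn i (d - i).
  case: eqP => // /eqP hj0.
  have hjd : j <= d - j by rewrite /j; lia.
  have hab : pz_alpha m j <= pz_beta m d j.
    by rewrite /pz_alpha /pz_beta; apply: leq_bin2l; lia.
  case: (leqP j 1) => hj1.
    have -> : j = 1 by lia.
    apply: L3.
      rewrite /pz_alpha; have -> : m + 1 - 1 = m by lia.
      rewrite binm1; lia.
    rewrite /pz_beta; have -> : d + m - 1 - 1 = d + m - 2 by lia. done.
    rewrite /pz_gamma; have -> : m + 1 - 2 = m - 1 by lia.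
    by rewrite binn muln1.
  apply: L1 => //.
    apply: leq_trans hB; rewrite /pz_beta; apply: leq_bin2l; lia.
  exact: ltnW (gam_big n m _ hm hj1).
Qed.
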